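(* Let $p$ be an odd prime and $r$ a positive integer. Then $$ \sum_{k=0}^{(p^r+1)/2}\frac{(4k-1)^3}{256^k(2k-1)^4}\binom{2k}{k}^4\equiv 3p^{4r} \pmod{p^{4r+1}}, \qquad \sum_{k=0}^{p^r-1}\frac{(4k-1)^3}{256^k(2k-1)^4}\binom{2k}{k}^4\equiv 3p^{4r} \pmod{p^{4r+1}}. $$
   Context: Congruences between rational numbers modulo a power of $p$ are understood in the ring of $p$-adic integers (i.e. the difference has $p$-adic valuation at least the exponent indicated). *)

(* Defs.v *)
From mathcomp Require Import all_boot all_order all_algebra.
Set Implicit Arguments. Unset Strict Implicit. Unset Printing Implicit Defensive.
Import Order.TTheory GRing.Theory Num.Theory.
Local Open Scope ring_scope.

(* Congruence of rationals modulo p^n in Z_p: the difference x - y has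
   p-adic valuation >= n, i.e. in lowest terms its numerator is divisible by
   p^n and its denominator is prime to p (for p prime). *)
Definition rat_cong_mod (p n : nat) (x y : rat) : Prop :=
  ((p ^ n)%:Z %| numq (x - y))%Z /\ ~~ ((p%:Z %| denq (x - y))%Z).

Definition term (k : nat) : rat :=
  ((4 * k%:Z - 1) ^+ 3)%:~R / ((256 ^ k)%:R * ((2 * k%:Z - 1) ^+ 4)%:~R)
  * ('C(2 * k, k))%:R ^+ 4.

(* Main.v *)
Require Import Defs.
From mathcomp Require Import all_boot all_order all_algebra.
From mathcomp Require Import ring lra zify.
Import Order.TTheory GRing.Theory Num.Theory.
Local Open Scope ring_scope.

Lemma binSS n : ('C((n.+1).*2, n.+1) * n.+1 = 2 * (n.*2).+1 * 'C(n.*2, n))%N.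
Proof.
have h1 := mul_bin_diag (n.+1).*2 n.
have h2 := mul_bin_diag (n.*2).+1 n.
have e : ('C((n.*2).+1, n) = 'C((n.*2).+1, n.+1))%N.
  rewrite -(bin_sub (_ : n <= (n.*2).+1)%N); last by lia.
  congr binomial; lia.
rewrite /= in h1 h2.

rewrite e in h1.
rewrite doubleS in h1 *.
nia.
Qed.

Definition G (m : nat) : rat :=
  ('C(m.*2, m))%:R ^+ 4 * (8 * m%:R ^+ 2 + 4 * m%:R - 1) / (256 ^ m)%:R.

Lemma telesc n : \sum_(0 <= k < n.+1) term k = G n.
Proof.
elim: n => [|n IH].
  by rewrite big_nat1 /term /G /=; rewrite !bin0.
rewrite big_nat_recr //= IH /term /G.
have hb := binSS n.
have hb' : ('C((n.+1).*2, n.+1))%:R = 2 * ((n.*2).+1)%:R * ('C(n.*2, n))%:R / (n.+1)%:R :> rat.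
  apply: (mulIf (x := (n.+1)%:R)); first by rewrite pnatr_eq0.
  rewrite mulfVK ?pnatr_eq0 // -!natrM hb. done.
have -> : (2 * n.+1)%N = (n.+1).*2 by rewrite -mul2n.
rewrite hb'.
set c := ('C(n.*2, n))%:R : rat.
rewrite !natrX.
set x := (n%:R : rat).
have e1 : ((4 * n.+1%:Z - 1) ^+ 3)%:~R = (4*x+3)^+3 :> rat.
  rewrite /x; ring.
have e2 : ((2 * n.+1%:Z - 1) ^+ 4)%:~R = (2*x+1)^+4 :> rat.
  rewrite /x; ring.
have e3 : (n.*2.+1)%:R = 2*x+1 :> rat.
  rewrite /x -addn1 -mul2n; ring.
have e4 : (n.+1)%:R = x+1 :> rat.
  rewrite /x -addn1; ring.
rewrite e1 e2 e3 e4 [256 ^+ n.+1]exprS.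
have hy : (256 ^+ n : rat) != 0 by rewrite expf_neq0.
have h2x : 2 * x + 1 != 0 by rewrite -e3 pnatr_eq0.
set y := (256 ^+ n : rat) in hy *. set d := c.
have hx : x + 1 != 0. rewrite -e4 pnatr_eq0 //.
clear hb hb' IH e1 e2 e3 e4. clearbody d y x c. field. by rewrite hy hx h2x.
Qed.

Lemma cong_helper (p e : nat) (A B : int) (x y : rat) :
  prime p -> (p ^ e %| `|A|)%N -> ~~ (p %| `|B|)%N ->
  x - y = A%:~R / B%:~R -> rat_cong_mod p e x y.
Proof.
move=> pp hA hB hxy; rewrite /rat_cong_mod hxy.
have B0 : B != 0 by apply: contra hB => /eqP ->; rewrite dvdn0.
set q := A%:~R / B%:~R : rat.
have eq1 : numq q * B = A * denq q.
  apply: (@intr_inj rat); rewrite !rmorphM /= numqE /q.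
  by rewrite mulrAC divfK // intr_eq0.
have eq2 : (`|numq q| * `|B| = `|A| * `|denq q|)%N.
  by rewrite -!abszM eq1.
have cop := coprime_num_den q.
split.
- rewrite /dvdz /=.
  have : (p ^ e %| `|numq q| * `|B|)%N by rewrite eq2 dvdn_mulr.
  by rewrite Gauss_dvdl // coprimeXl // prime_coprime.
- rewrite /dvdz /=; apply: contra hB => hd.
  have : (`|denq q| %| `|numq q| * `|B|)%N by rewrite eq2 dvdn_mull.
  rewrite Gauss_dvdr; last by rewrite coprime_sym.
  by apply: dvdn_trans.
Qed.

Lemma L1 p r k : prime p -> (0 < k < p ^ r)%N -> (p %| 'C(p ^ r, k))%N.
Proof.
move=> pp /andP[k0 kN].
have h := mul_bin_diag (p ^ r) k.-1.
rewrite prednK // in h.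
apply/negPn/negP => nd.
have : (p ^ r %| k * 'C(p ^ r, k))%N by rewrite -h dvdn_mulr.
rewrite Gauss_dvdl; last by rewrite coprimeXl // prime_coprime.
move/dvdn_leq => /(_ k0). by rewrite leqNgt kN.
Qed.

Section Fp.
Variables (p r : nat).
Hypothesis pp : prime p.
Local Notation F := 'F_p.
Local Notation N := (p ^ r)%N.

Lemma chF : p \in [pchar F]. Proof. exact: pchar_Fp. Qed.

Lemma natF0 n : ((n%:R : F) == 0) = (p %| n)%N.
Proof. by rewrite (dvdn_pcharf chF). Qed.

Lemma intF0 (z : int) : ((z%:~R : F) == 0) = (p %| `|z|)%N.
Proof.
case: z => n; first by rewrite /= -natF0.
by rewrite NegzE /= rmorphN /= oppr_eq0 -natF0.
Qed.

Lemma L2 a i : (i < N)%N -> ('C(N + a, i)%:R : F) = 'C(a, i)%:R.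
Proof.
elim: a i => [|a IH] i iN.
  case: i iN => [|i] iN; first by rewrite !bin0.
  rewrite addn0 bin0n. apply/eqP; rewrite natF0. apply: L1 => //.
case: i iN => [|i] iN; first by rewrite !bin0.
rewrite addnS !binS !natrD IH // IH //. exact: ltnW.
Qed.

Lemma L3 i : (i < N)%N -> ('C(N.-1, i)%:R : F) = (-1) ^+ i.
Proof.
have N0 : (0 < N)%N by rewrite expn_gt0 prime_gt0.
elim: i => [|i IH] iN; first by rewrite bin0.
have h : ('C(N, i.+1)%:R : F) = 0.
  apply/eqP; rewrite natF0; apply: L1 => //.
rewrite -(prednK N0) binS natrD IH ?(ltnW iN) // in h.
rewrite exprS. apply/eqP; rewrite -subr_eq0 -h; apply/eqP; ring.
Qed.

Lemma L4 : (2 : F) ^+ N = 2.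
Proof.
elim: r => [|s IH]; first by rewrite expn0 expr1.
rewrite expnSr exprM IH.
have := pFrobenius_aut_nat chF 2. by rewrite pFrobenius_autE.
Qed.
End Fp.

Lemma two_neq0 p : prime p -> odd p -> (2 : 'F_p) != 0.
Proof.
move=> pp op. rewrite (natF0 _ pp). apply/negP => /(dvdn_leq (isT : (0 < 2)%N)) h.
have := prime_gt1 pp. move: op h. case: p {pp} => [|[|[|q]]] //.
Qed.

Lemma case2 p r : prime p -> odd p -> (0 < r)%N ->
  rat_cong_mod p (4 * r).+1
    (\sum_(0 <= k < p ^ r) term k) (3 * ((p ^ (4 * r))%:R)).
Proof.
move=> pp op r0.
rewrite (_ : (p ^ (4 * r) = (p ^ r) ^ 4)%N); last by rewrite mulnC expnM.
have oN : odd (p ^ r) by rewrite oddX op orbT.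
have eN : (p ^ r = ((p ^ r)./2.*2).+1)%N.
  by rewrite -[LHS]odd_double_half oN.
move: oN eN; move EN: (p ^ r)%N => N oN.
move Ej: (N./2) => j eN.
have hs : \sum_(0 <= k < N) term k = G (j.*2) by rewrite eN; exact: telesc.
rewrite hs /G.
move EB: ('C((j.*2).*2.+1, j.*2)) => B.
have rel : ((j.*2).*2.+1 * 'C((j.*2).*2, j.*2) = N * B)%N.
  have h := mul_bin_diag ((j.*2).*2.+1) (j.*2).
  rewrite /= in h. rewrite h eN -EB. congr (_ * _)%N.
  rewrite -(bin_sub (_ : (j.*2 <= (j.*2).*2.+1)%N)); last by lia.
  congr binomial; lia.
have hN : ((N%:R : 'F_p) = 0).
  apply/eqP; rewrite (natF0 _ pp) -EN. by rewrite dvdn_exp.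
have hm : (((j.*2)%:R : 'F_p) = -1).
  by apply/eqP; rewrite -subr_eq0 opprK -hN eN -[(j.*2).+1]addn1 natrD.
have hB : ((B%:R : 'F_p) = 1).
  rewrite -EB (_ : (j.*2).*2.+1 = N + j.*2)%N; last by rewrite eN; lia.
  rewrite -EN L2 // ?binn // EN eN. lia.
have h2 : (2 : 'F_p) != 0 by apply: two_neq0.
have h2m : ((2 : 'F_p) ^+ (j.*2) = 1).
  have := L4 p r pp. rewrite EN eN exprS. move/(congr1 (fun x => x / 2)).
  by rewrite mulrAC divff // mul1r.
have hw : (((256 ^ (j.*2))%N%:R : 'F_p) = 1).
  rewrite natrX (_ : 256%:R = (2 : 'F_p) ^+ 8); last by ring.
  by rewrite -exprM mulnC exprM h2m expr1n.
apply: (@cong_helper p _ ((N ^ 4)%N%:Z * ((B%:Z)^+4 * (8*(j.*2)%:Z^+2 + 4*(j.*2)%:Z - 1)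
     - 3 * ((j.*2).*2.+1)%:Z ^+4 * (256^(j.*2))%N%:Z))
   ((((j.*2).*2.+1)^4 * 256^(j.*2))%N%:Z)).
- done.
- rewrite abszM absz_nat expnS mulnC. rewrite (_ : p ^ (4 * r) = N ^ 4)%N; last by rewrite -EN -expnM mulnC.
  rewrite dvdn_pmul2l; last first.
    by rewrite expn_gt0 -EN expn_gt0 prime_gt0.
  rewrite -intF0 //.
  rewrite (_ : (j.*2).*2.+1 = (2 * j.*2 + 1)%N); last by rewrite mul2n addn1.
  move: hm hw; clear -hB; move: (j.*2) => m hm.
  move: (256 ^ m)%N => w hw.
  have e : ((((B%:Z)^+4 * (8*(m)%:Z^+2 + 4*(m)%:Z - 1)
     - 3 * (2 * m + 1)%N%:Z ^+4 * w%:Z))%:~R : 'F_p) =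
     (B%:R)^+4 * (8 * (m%:R)^+2 + 4 * m%:R - 1) - 3 * (2 * m%:R + 1) ^+ 4 * w%:R.
    ring.
  rewrite e hB hm hw. apply/eqP. ring.
- rewrite absz_nat -(natF0 _ pp) natrM hw mulr1 natrX.
  rewrite (_ : (j.*2).*2.+1 = (j.*2) + (j.*2) + 1)%N; last by lia.
  rewrite !natrD hm. rewrite (_ : (-1 + -1 + 1 : 'F_p) = -1); last by ring.
  by rewrite expf_neq0 // oppr_eq0 oner_eq0.
- have hd' : (2 * (j.*2)%:R + 1 : rat) != 0.
    by rewrite (_ : 2 * (j.*2)%:R + 1 = (2 * j.*2 + 1)%N%:R) ?pnatr_eq0 ?addn1 //; ring.
  have hC : ('C((j.*2).*2, j.*2)%:R : rat) = N%:R * B%:R / (2 * (j.*2)%:R + 1).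
    apply: (mulIf hd'); rewrite mulfVK //.
    have := congr1 (fun n => n%:R : rat) rel.
    rewrite /= !natrM (_ : (j.*2).*2.+1 = (2 * j.*2 + 1)%N); last by rewrite mul2n addn1.
    rewrite natrD natrM => <-. by rewrite mulrC.
  rewrite hC.
  have h2x : (j.*2).*2.+1 = (2 * j.*2 + 1)%N by rewrite mul2n addn1.
  rewrite h2x.
  clear EB rel hs Ej eN oN EN hm hB h2m hw hN. move: (j.*2) => m.
  have hd : (2 * m%:R + 1 : rat) != 0.
    by rewrite (_ : 2 * m%:R + 1 = (2 * m + 1)%N%:R) ?pnatr_eq0 ?addn1 //; ring.
  have hw : ((256 ^ m)%N%:R : rat) != 0 by rewrite pnatr_eq0 expn_eq0.
  move: hw; move: (256 ^ m)%N => w hw.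
  field. by rewrite hw hd.
Qed.

Lemma case1 p r : prime p -> odd p -> (0 < r)%N ->
  rat_cong_mod p (4 * r).+1
    (\sum_(0 <= k < ((p ^ r).+1)./2.+1) term k) (3 * ((p ^ (4 * r))%:R)).
Proof.
move=> pp op r0.
rewrite (_ : (p ^ (4 * r) = (p ^ r) ^ 4)%N); last by rewrite mulnC expnM.
have oN : odd (p ^ r) by rewrite oddX op orbT.
have eN : (p ^ r = ((p ^ r)./2.*2).+1)%N.
  by rewrite -[LHS]odd_double_half oN.
move: oN eN; move EN: (p ^ r)%N => N oN.
move Ej: (N./2) => j eN.
have hs : \sum_(0 <= k < N.+1./2.+1) term k = G j.+1.
  rewrite eN (_ : (j.*2).+2./2 = j.+1); first exact: telesc.
  by rewrite -doubleS doubleK.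
rewrite hs /G.
move EW: ('C(j.*2, j)) => W.
have rel := binSS j. rewrite EW in rel.
have hN : ((N%:R : 'F_p) = 0).
  apply/eqP; rewrite (natF0 _ pp) -EN. by rewrite dvdn_exp.
have hm : (((j.*2)%:R : 'F_p) = -1).
  by apply/eqP; rewrite -subr_eq0 opprK -hN eN -[(j.*2).+1]addn1 natrD.
have hW : ((W%:R : 'F_p) ^+ 4 = 1).
  rewrite -EW (_ : j.*2 = N.-1); last by rewrite eN.
  rewrite -EN L3 //; last by rewrite EN eN; lia.
  by rewrite -exprM mulnC exprM (_ : (-1 : 'F_p) ^+ 4 = 1) ?expr1n //; ring.
have h2 : (2 : 'F_p) != 0 by apply: two_neq0.
have h2m : ((2 : 'F_p) ^+ (j.*2) = 1).
  have := L4 p r pp. rewrite EN eN exprS. move/(congr1 (fun x => x / 2)).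
  by rewrite mulrAC divff // mul1r.
have hw : (((256 ^ j.+1)%N%:R : 'F_p) = 256).
  rewrite natrX (_ : 256%:R = (2 : 'F_p) ^+ 8); last by ring.
  rewrite -exprM (_ : (8 * j.+1 = j.*2 * 4 + 8)%N); last by rewrite -mul2n; lia.
  by rewrite exprD exprM h2m expr1n mul1r; ring.
have hj : ((j.+1)%:R : 'F_p) = 2^-1.
  apply: (mulIf h2). rewrite mulVf //. rewrite -[j.+1]addn1 natrD.
  rewrite mulrDl mul1r (mulrC _ 2) -natrM mul2n hm; ring.
apply: (@cong_helper p _ ((N ^ 4)%N%:Z * (16 * (W%:Z)^+4 * (8*(j.+1)%:Z^+2 + 4*(j.+1)%:Z - 1)
     - 3 * (j.+1)%:Z ^+4 * (256^(j.+1))%N%:Z))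
   (((j.+1)^4 * 256^(j.+1))%N%:Z)).
- done.
- rewrite abszM absz_nat expnS mulnC. rewrite (_ : p ^ (4 * r) = N ^ 4)%N; last by rewrite -EN -expnM mulnC.
  rewrite dvdn_pmul2l; last first.
    by rewrite expn_gt0 -EN expn_gt0 prime_gt0.
  rewrite -intF0 //.
  move: hj hw; clear -hW h2; move: (j.+1) => m hm.
  move: (256 ^ m)%N => w hw.
  have e : (((16 * (W%:Z)^+4 * (8*(m)%:Z^+2 + 4*(m)%:Z - 1)
     - 3 * m%:Z ^+4 * w%:Z))%:~R : 'F_p) =
     16 * (W%:R)^+4 * (8 * (m%:R)^+2 + 4 * m%:R - 1) - 3 * m%:R ^+ 4 * w%:R.
    ring.
  rewrite e hW hm hw. apply/eqP. field. done.
- rewrite absz_nat -(natF0 _ pp) natrM hw natrX hj.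
  rewrite (_ : 256 = (2 : 'F_p) ^+ 8); last by ring.
  by rewrite mulf_neq0 // expf_neq0 // invr_eq0.
- have hd' : ((j.+1)%:R : rat) != 0 by rewrite pnatr_eq0.
  have hC : ('C((j.+1).*2, j.+1)%:R : rat) = 2 * N%:R * W%:R / (j.+1)%:R.
    apply: (mulIf hd'); rewrite mulfVK //.
    have := congr1 (fun n => n%:R : rat) rel.
    by rewrite /= !natrM -eN.
  rewrite hC.
  clear EW rel hs Ej eN oN EN hm hW h2m hw hN hj.
  move: hd'; move: (j.+1) => m hd.
  have hw : ((256 ^ m)%N%:R : rat) != 0 by rewrite pnatr_eq0 expn_eq0.
  move: hw; move: (256 ^ m)%N => w hw.
  field. by rewrite hw hd.
Qed.

Theorem mainTheorem3 (p r : nat) :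
  prime p -> odd p -> (0 < r)%N ->
  rat_cong_mod p (4 * r).+1
    (\sum_(0 <= k < ((p ^ r).+1)./2.+1) term k) (3 * ((p ^ (4 * r))%:R)) /\
  rat_cong_mod p (4 * r).+1
    (\sum_(0 <= k < p ^ r) term k) (3 * ((p ^ (4 * r))%:R)).
Proof.
move=> pp op r0; split; [exact: case1 | exact: case2].
Qed.
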